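(* Let $A\subset\mathbb{R}^n$ with $0\in\overline{A}$, and let $\phi:(\mathbb{R}^n,0)\to(\mathbb{R}^n,0)$ be a bi-Lipschitz homeomorphism with constants $0<K_1\le K_2$, i.e. $K_1|x_1-x_2|\le|\phi(x_1)-\phi(x_2)|\le K_2|x_1-x_2|$ near $0$. Then for $d>0$ and $K>0$, $$ST_d\Big(\phi(A);\frac{KK_1}{K_2^d}\Big)\subset\phi(ST_d(A;K))\subset ST_d\Big(\phi(A);\frac{KK_2}{K_1^d}\Big)$$ in a small neighbourhood of $0\in\mathbb{R}^n$.
   Context: Sea-tangle neighbourhood of degree $d>0$ and width $C>0$: $ST_d(X;C)=\{x\in\mathbb{R}^n : \mathrm{dist}(x,X)\le C|x|^d\}$. *)

(* Defs.v *)
From HB Require Import structures.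
From mathcomp Require Import all_boot all_order all_algebra.
From mathcomp Require Import all_classical all_reals all_analysis.
Set Implicit Arguments. Unset Strict Implicit. Unset Printing Implicit Defensive.
Import Order.TTheory GRing.Theory Num.Theory.
Import numFieldNormedType.Exports.
Local Open Scope classical_set_scope.
Local Open Scope ring_scope.

Definition enorm (R : realType) (n : nat) (x : 'rV[R]_n) : R :=
  Num.sqrt (\sum_(i < n) x ord0 i ^+ 2).

Definition edist (R : realType) (n : nat) (x : 'rV[R]_n) (X : set 'rV[R]_n) : R :=
  inf [set enorm (x - y) | y in X].

Definition ST (R : realType) (n : nat) (d : R) (X : set 'rV[R]_n) (C : R)
  : set 'rV[R]_n :=
  [set x | edist x X <= C * (enorm x) `^ d].

(* Main.v *)
Require Import Defs.
From HB Require Import structures.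
From mathcomp Require Import all_boot all_order all_algebra.
From mathcomp Require Import all_classical all_reals all_analysis.
Import Order.TTheory GRing.Theory Num.Theory.
Import numFieldNormedType.Exports.
Local Open Scope classical_set_scope.
Local Open Scope ring_scope.

Section H.
Variables (R : realType) (n : nat).
Implicit Types (x y : 'rV[R]_n).

Lemma enorm_ge0 x : 0 <= enorm x.
Proof. exact: sqrtr_ge0. Qed.

Lemma enorm0 : enorm (0 : 'rV[R]_n) = 0.
Proof. by rewrite /enorm big1 ?sqrtr0 // => i _; rewrite mxE expr0n. Qed.

Lemma coord_le_enorm x j : `|x ord0 j| <= enorm x.
Proof.
rewrite /enorm -sqrtr_sqr ler_sqrt ?sumr_ge0 // => [|i _]; last exact: sqr_ge0.
rewrite (bigD1 j) //= ler_wpDr // ?sumr_ge0 // => i _; exact: sqr_ge0.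
Qed.

Lemma mxnorm_le_enorm x : `|x| <= enorm x.
Proof.
rewrite [leLHS]/Num.Def.normr /= mx_normrE.
apply: bigmax_le => [|[i j] _]; first exact: enorm_ge0.
by rewrite /= (ord1 i); exact: coord_le_enorm.
Qed.

Lemma coord_le_mxnorm x j : `|x ord0 j| <= `|x|.
Proof.
rewrite [leRHS]/Num.Def.normr /= mx_normrE.
exact: (le_bigmax _ _ (ord0, j)).
Qed.

Definition cn := Num.sqrt (n%:R : R) + 1.

Lemma cn_ge1 : 1 <= cn.
Proof. by rewrite /cn lerDr sqrtr_ge0. Qed.

Lemma enorm_le x : enorm x <= cn * `|x|.
Proof.
apply: (@le_trans _ _ (Num.sqrt (n%:R) * `|x|)); last first.
  by rewrite ler_wpM2r // /cn lerDl.
have -> : `|x| = Num.sqrt (`|x| ^+ 2) by rewrite sqrtr_sqr normr_id.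
rewrite /enorm -sqrtrM ?ler0n // ler_sqrt; last first.
  by rewrite mulr_ge0 ?ler0n ?sqr_ge0.
apply: (@le_trans _ _ (\sum_(i < n) `|x|^+2)).
  apply: ler_sum => i _; rewrite -real_normK ?num_real //.
  by rewrite lerXn2r ?nnegrE ?normr_ge0 // coord_le_mxnorm.
by rewrite sumr_const card_ord mulr_natl.
Qed.

Lemma enorm_tri x y : enorm y <= cn * (enorm x + enorm (x - y)).
Proof.
apply: (le_trans (enorm_le y)); rewrite ler_wpM2l ?(le_trans _ cn_ge1) //.
have e : y = x - (x - y) by rewrite opprB addrC subrK.
rewrite [in leLHS]e.
apply: (le_trans (ler_normB _ _)).
by rewrite lerD // mxnorm_le_enorm.
Qed.
End H.
Section H2.
Variables (R : realType) (n : nat).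
Implicit Types (x y : 'rV[R]_n) (X : set 'rV[R]_n).

Lemma edist_approx x X b : X !=set0 -> Defs.edist x X < b ->
  exists2 y, X y & enorm (x - y) < b.
Proof.
move=> [y0 Xy0] hb.
have hinf : has_inf [set enorm (x - y) | y in X].
  split; first by exists (enorm (x - y0)), y0.
  by exists 0 => _ [y _ <-]; exact: enorm_ge0.
have [|_ [y Xy <-]] := @inf_adherent _ _ (b - Defs.edist x X) _ hinf.
  by rewrite subr_gt0.
by rewrite /Defs.edist subrKC => h; exists y.
Qed.

Lemma edist_le x X B :
  (forall e, 0 < e -> exists2 y, X y & enorm (x - y) <= B + e) -> Defs.edist x X <= B.
Proof.
move=> H; apply/ler_addgt0Pr => e e0.
have [y Xy hy] := H e e0.
apply: le_trans hy; apply: ge_inf; last by exists y.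
by exists 0 => _ [z _ <-]; exact: enorm_ge0.
Qed.

Lemma cont0 (psi : 'rV[R]_n -> 'rV[R]_n) : continuous psi -> psi 0 = 0 ->
  forall e, 0 < e -> exists2 dl, 0 < dl & forall y, enorm y < dl -> enorm (psi y) < e.
Proof.
move=> cpsi p0 e e0.
have ec : 0 < e / cn R n by rewrite divr_gt0 // (lt_le_trans ltr01 (cn_ge1 R n)).
have := (cvgrPdist_lt _ _).1 (cpsi 0) _ ec.
rewrite p0 => /(_ _) /nbhs_ballP [dl /= dl0 H].
exists dl => // y hy.
have := H y; rewrite -ball_normE /= sub0r normrN => /(_ (le_lt_trans (mxnorm_le_enorm _ _ y) hy)).
rewrite sub0r normrN => h.
apply: (le_lt_trans (enorm_le _ _ (psi y))).
by rewrite -ltr_pdivlMl ?(lt_le_trans ltr01 (cn_ge1 R n)) // mulrC.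
Qed.
End H2.

Lemma smallpow (R : realType) (d C eta : R) : 0 < d -> 0 < C -> 0 < eta ->
  exists2 s, 0 < s & s <= eta /\ forall t, 0 <= t -> t <= s -> C * t `^ d <= eta.
Proof.
move=> d0 C0 e0.
set u := (eta / C) `^ d^-1.
have u0 : 0 < u by rewrite powR_gt0 // divr_gt0.
exists (Num.min eta u); first by rewrite lt_min e0 u0.
split; first by rewrite ge_min lexx.
move=> t t0 ts.
have tu : t <= u by apply: (le_trans ts); rewrite ge_min lexx orbT.
have : t `^ d <= u `^ d.
  by apply: (ge0_ler_powR (ltW d0)) => //; rewrite nnegrE ltW.
rewrite /u -powRrM mulVf ?gt_eqF // powRr1; last by rewrite divr_ge0 // ltW.
by rewrite ler_pdivlMr // mulrC.
Qed.
From mathcomp Require Import ring lra.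
Theorem lemma4p4 (R : realType) (n : nat) (A : set 'rV[R]_n)
  (phi : 'rV[R]_n -> 'rV[R]_n) (K1 K2 d K : R) :
  closure A 0 ->
  (exists psi : 'rV[R]_n -> 'rV[R]_n,
     [/\ cancel phi psi, cancel psi phi, continuous phi & continuous psi]) ->
  phi 0 = 0 ->
  0 < K1 -> K1 <= K2 ->
  (exists2 r : R, 0 < r & forall x1 x2 : 'rV[R]_n,
     enorm x1 < r -> enorm x2 < r ->
     K1 * enorm (x1 - x2) <= enorm (phi x1 - phi x2) /\
     enorm (phi x1 - phi x2) <= K2 * enorm (x1 - x2)) ->
  0 < d -> 0 < K ->
  exists2 r : R, 0 < r & forall x : 'rV[R]_n, enorm x < r ->
    (ST d (phi @` A) (K * K1 / K2 `^ d) x -> (phi @` ST d A K) x) /\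
    ((phi @` ST d A K) x -> ST d (phi @` A) (K * K2 / K1 `^ d) x).
Proof.
move=> clA [psi [phK psiK cphi cpsi]] phi0 K10 K12 [r0 r00 Lip] d0 K0.
have psi0 : psi 0 = 0 by rewrite -phi0 phK.
have K20 : 0 < K2 := lt_le_trans K10 K12.
set c := cn R n.
have c1 : 1 <= c := cn_ge1 R n.
have c0 : 0 < c := lt_le_trans ltr01 c1.
have An : A !=set0.
  by have [a [Aa _]] := clA setT filterT; exists a.
have pAn : (phi @` A) !=set0.
  by case: An => a Aa; exists (phi a), a.
have h3c : 0 < 3 * c by rewrite mulr_gt0.
have le3c : forall u, 0 <= u -> u / (3 * c) <= u.
  move=> u u0; rewrite ler_pdivrMr // ler_peMr //.
  by rewrite (le_trans c1) // ler_peMl ?(le_trans ler01 c1) // ler1n.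
have e3 : forall u, c * (u / (3 * c) + (u / (3 * c) + u / (3 * c))) = u.
  by move=> u; field; rewrite gt_eqF.
set eta := r0 / (3 * c).
have eta0 : 0 < eta by rewrite divr_gt0.
have etar : eta <= r0 by rewrite le3c // ltW.
have [s s0 [s_eta hs]] := smallpow _ _ _ _ d0 K0 eta0.
have [dl2 dl20 Hd2] := cont0 _ _ _ cpsi psi0 _ s0.
have [dlp dlp0 Hdp] := cont0 _ _ _ cpsi psi0 _ eta0.
set mu := dlp / (3 * c).
have mu0 : 0 < mu by rewrite divr_gt0.
have mudlp : mu <= dlp by rewrite le3c // ltW.
have K2d0 : 0 < K2 `^ d by rewrite powR_gt0.
have K1d0 : 0 < K1 `^ d by rewrite powR_gt0.
set c1' := K * K1 / K2 `^ d.
have c10 : 0 < c1' by rewrite divr_gt0 // mulr_gt0.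
have [s1 s10 [s1mu hs1]] := smallpow _ _ _ _ d0 c10 mu0.
exists (Num.min dl2 s1); first by rewrite lt_min dl20 s10.
move=> x; rewrite lt_min => /andP[xdl2 xs1].
have xge0 := enorm_ge0 _ _ x.
split.
- move=> hST; exists (psi x); last exact: psiK.
  set z := psi x.
  have xdlp : enorm x < dlp.
    by apply: (lt_le_trans xs1); apply: (le_trans s1mu mudlp).
  have zeta : enorm z < eta by exact: Hdp.
  have zr : enorm z < r0 := lt_le_trans zeta etar.
  have zge0 := enorm_ge0 _ _ z.
  rewrite /ST /=; apply: edist_le => e e0.
  set e' := Num.min (e * K1) mu.
  have e'0 : 0 < e' by rewrite lt_min mu0 mulr_gt0.
  have [y [a Aa <-] hy] := edist_approx _ _ x (phi @` A) (c1' * enorm x `^ d + e') pAn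
    (le_lt_trans hST (ltr_pwDr e'0 (lexx _))).
  have hxs : c1' * enorm x `^ d <= mu by apply: hs1 => //; exact: ltW.
  have e'mu : e' <= mu by rewrite ge_min lexx orbT.
  have pa : enorm (phi a) < dlp.
    apply: (le_lt_trans (enorm_tri _ _ x (phi a))).
    rewrite -(e3 dlp) ltr_pM2l // -/mu.
    rewrite ltr_leD ?(lt_le_trans xs1 s1mu) //.
    by apply/ltW; apply: (lt_le_trans hy); apply: lerD.
  have ar : enorm a < r0 by apply: (lt_le_trans _ etar); rewrite -(phK a); exact: Hdp.
  have [L1 _] := Lip z a zr ar.
  have [_ L2] := Lip z 0 zr (ltac:(by rewrite enorm0)).
  rewrite phi0 !subr0 /z psiK in L2.
  rewrite /z psiK in L1.
  have px : enorm x `^ d <= K2 `^ d * enorm z `^ d.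
    rewrite -powRM ?(ltW K20) //.
    by apply: (ge0_ler_powR (ltW d0)) => //; rewrite nnegrE mulr_ge0 // ltW.
  have eq1 : c1' * (K2 `^ d * enorm z `^ d) = K1 * (K * enorm z `^ d).
    by rewrite /c1'; field; rewrite gt_eqF.
  exists a => //; rewrite -(ler_pM2l K10) mulrDr.
  apply: (le_trans L1); apply: (le_trans (ltW hy)).
  apply: lerD; last by rewrite mulrC ge_min lexx.
  by rewrite -eq1 ler_pM2l.
- case=> z Sz phzx; rewrite -phzx in xdl2 *.
  have zs : enorm z < s by rewrite -(phK z); exact: Hd2.
  have zeta : enorm z < eta := lt_le_trans zs s_eta.
  have zr : enorm z < r0 := lt_le_trans zeta etar.
  have zge0 := enorm_ge0 _ _ z.
  rewrite /ST /=; apply: edist_le => e e0.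
  set e' := Num.min (e / K2) eta.
  have e'0 : 0 < e' by rewrite lt_min eta0 divr_gt0.
  have [a Aa ha] := edist_approx _ _ z A (K * enorm z `^ d + e') An
    (le_lt_trans Sz (ltr_pwDr e'0 (lexx _))).
  have hzs : K * enorm z `^ d <= eta by apply: hs => //; exact: ltW.
  have e'eta : e' <= eta by rewrite ge_min lexx orbT.
  have ar : enorm a < r0.
    apply: (le_lt_trans (enorm_tri _ _ z a)).
    rewrite -(e3 r0) ltr_pM2l // -/eta.
    rewrite ltr_leD //.
    by apply/ltW; apply: (lt_le_trans ha); apply: lerD.
  exists (phi a); first by exists a.
  have [_ L1] := Lip z a zr ar.
  have [L2 _] := Lip z 0 zr (ltac:(by rewrite enorm0)).
  rewrite phi0 !subr0 in L2.
  have pz : K1 `^ d * enorm z `^ d <= enorm (phi z) `^ d.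
    rewrite -powRM ?(ltW K10) //.
    by apply: (ge0_ler_powR (ltW d0)) => //; rewrite nnegrE ?mulr_ge0 ?enorm_ge0 // ltW.
  have eq1 : K * K2 / K1 `^ d * (K1 `^ d * enorm z `^ d) = K2 * (K * enorm z `^ d).
    by field; rewrite gt_eqF.
  apply: (le_trans L1); apply: (le_trans (ler_wpM2l (ltW K20) (ltW ha))).
  rewrite mulrDr; apply: lerD.
    rewrite -eq1 ler_wpM2l // divr_ge0 // ?mulr_ge0 // ?ltW //.
  by rewrite -ler_pdivlMl // mulrC ge_min lexx.
Qed.
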